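(* Let $G$ be a cubic graph with a bridge $e$, and let $H_1$ and $H_2$ be the components of $G-e$. Then $c_2(G)=c_2(H_1)+c_2(H_2)$.
   Context: For a graph $G=(V,E)$ and a set $S_0\subseteq V$, the irreversible $2$-threshold conversion process is defined by: for $t=1,2,\dots$, $S_t$ is obtained from $S_{t-1}$ by adjoining all vertices having at least $2$ neighbours in $S_{t-1}$. $S_0$ is a $2$-conversion set if $S_t=V$ for some $t\ge 0$, and $c_2(G)$ is the minimum size of a $2$-conversion set of $G$ (defined for any graph, not only cubic ones). *)

(* Defs.v *)
From mathcomp Require Import all_boot.
From mathcomp Require Import boolp.
Set Implicit Arguments. Unset Strict Implicit. Unset Printing Implicit Defensive.

(* A graph is given by a vertex set V : {set T} inside a finite type T and an
   adjacency relation r : rel T (only edges with both ends in V matter). *)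

Definition conv_step (T : finType) (V : {set T}) (r : rel T) (S : {set T}) : {set T} :=
  S :|: [set x in V | 2 <= #|[set y in V | (y \in S) && r x y]|].

Definition is_2conv_set (T : finType) (V : {set T}) (r : rel T) (S0 : {set T}) : Prop :=
  S0 \subset V /\ exists t : nat, iter t (conv_step V r) S0 = V.

(* c_2 of (V, r): minimum size of a 2-conversion set (V itself is one). *)
Definition c2 (T : finType) (V : {set T}) (r : rel T) : nat :=
  \big[minn/#|V|]_(S : {set T} | `[< is_2conv_set V r S >]) #|S|.

Definition simple_graph (T : finType) (e : rel T) : Prop :=
  symmetric e /\ irreflexive e.
Definition cubic (T : finType) (e : rel T) : Prop :=
  forall x : T, #|[set y | e x y]| = 3.
Definition connected (T : finType) (e : rel T) : Prop :=
  forall x y : T, connect e x y.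

Definition del_edge (T : finType) (e : rel T) (u v : T) : rel T :=
  fun x y => e x y && ([set x; y] != [set u; v]).

(* Main.v *)
Require Import Defs.
From mathcomp Require Import all_boot.
From mathcomp Require Import boolp zify.
Set Implicit Arguments. Unset Strict Implicit. Unset Printing Implicit Defensive.

Section Gen.
Variable T : finType.

Definition stuck (V : {set T}) (r : rel T) (W : {set T}) :=
  forall w, w \in W -> #|[set y in V :\: W | r w y]| <= 1.

Lemma stuck_iter (V : {set T}) (r : rel T) (W S0 : {set T}) : stuck V r W -> W :&: S0 = set0 ->
  forall t, W :&: iter t (conv_step V r) S0 = set0.
Proof.
move=> st h0; elim=> [|t IH] //=.
apply/setP=> x; rewrite !inE; apply/negP=> /andP[xW].
move=> /orP[xS|/andP[xV]].
  by move/setP: IH => /(_ x); rewrite !inE xW xS.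
apply/negP; rewrite -ltnNge ltnS; apply: leq_trans (st _ xW).
apply: subset_leq_card; apply/subsetP=> y; rewrite !inE => /and3P[yV yS ->].
rewrite yV andbT andbT; apply/negP=> yW.
by move/setP: IH => /(_ y); rewrite !inE yW yS.
Qed.

Lemma stuck_conv (V : {set T}) (r : rel T) (W S0 : {set T}) : stuck V r W -> W :&: S0 = set0 -> W \subset V ->
  is_2conv_set V r S0 -> W = set0.
Proof.
move=> st h0 WV [_ [t ht]]; have := stuck_iter st h0 t; rewrite ht.
by move/setIidPl: WV => ->.
Qed.

Lemma iter_fix (f : {set T} -> {set T}) (S : {set T}) : (forall X : {set T}, X \subset f X) ->
  exists t, f (iter t f S) = iter t f S.
Proof.
move=> inc.
suff H : forall t, (exists k, f (iter k f S) = iter k f S) \/ t <= #|iter t f S|.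
  case: (H #|T|.+1) => // /leq_trans/(_ (max_card _)); by rewrite ltnn.
elim=> [|t [IH|IH]]; [by right| by left|].
have [E|N] := eqVneq (f (iter t f S)) (iter t f S); first by left; exists t.
right; apply: leq_ltn_trans IH _ => /=; apply: proper_card.
by rewrite properEneq eq_sym N inc.
Qed.

Lemma conv_sub (V : {set T}) (r : rel T) (S : {set T}) : S \subset V -> conv_step V r S \subset V.
Proof.
move=> SV; apply/subsetP=> x; rewrite /conv_step !inE => /orP[/(subsetP SV)//|].
by case/andP.
Qed.

Lemma conv_or_stuck (V : {set T}) (r : rel T) (S0 : {set T}) : S0 \subset V ->
  is_2conv_set V r S0 \/
  exists W, [/\ W != set0, W \subset V, stuck V r W & W :&: S0 = set0].
Proof.
move=> S0V.
have [t ht] := iter_fix S0 (fun X => subsetUl X _ : X \subset conv_step V r X).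
set F := iter t _ S0 in ht.
have FV : F \subset V.
  rewrite /F; elim: t {ht F} => //= t IH; exact: conv_sub.
have S0F : S0 \subset F.
  rewrite /F; elim: t {ht F FV} => //= t IH; apply: subset_trans IH _; exact: subsetUl.
have [FeV|FnV] := eqVneq F V; first by left; split=> //; exists t.
right; exists (V :\: F); split.
- apply/set0Pn; move: FnV; rewrite eqEsubset FV /= => /subsetPn[x xV xF].
  by exists x; rewrite inE xV xF.
- exact: subsetDl.
- move=> w; rewrite inE => /andP[wF wV]; rewrite leqNgt; apply/negP=> h.
  have : w \in conv_step V r F.
    rewrite /conv_step inE; apply/orP; right; rewrite inE wV.
    apply: leq_trans h _; apply: subset_leq_card; apply/subsetP=> y.
    by rewrite !inE; case: (y \in F); case: (y \in V); case: (r w y).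
  by rewrite ht; move=> wF2; rewrite wF2 in wF.
- apply/setP=> x; rewrite !inE; apply/negP=> /andP[/andP[xF _] xS].
  by rewrite (subsetP S0F _ xS) in xF.
Qed.


Lemma core (e : rel T) : symmetric e -> irreflexive e ->
  forall n (X : {set T}) (v : T), #|X| = n -> X != set0 ->
  (forall x, x \in X -> 2 <= #|[set y in X | e x y]| + (x == v)) ->
  exists C : {set T}, [/\ C \subset X, C != set0 &
     forall c, c \in C -> 2 <= #|[set y in C | e c y]|].
Proof.
move=> sym irr; elim=> [|n IH] X v cX Xn0 hX.
  by move: Xn0; rewrite -card_gt0 cX.
have [allX|] := boolP [forall x in X, 2 <= #|[set y in X | e x y]|].
  exists X; split=> // c cX1; exact: (implyP (forallP allX c)) cX1.
rewrite negb_forall_in => /existsP[x /andP[xX /negP hx]].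
have := hX x xX; case: eqVneq => [xv|_]; last by rewrite addn0.
subst x; rewrite addn1 ltnS => h1.
have c1 : #|[set y in X | e v y]| == 1.
  by rewrite eqn_leq h1 andbT -ltnS; rewrite ltnNge; apply/negP.
have [y hy] := cards1P c1.
have yX : y \in X by have := set11 y; rewrite -hy inE => /andP[].
have evy : e v y by have := set11 y; rewrite -hy inE => /andP[].
have yv : y != v by apply/eqP=> yv; subst y; rewrite irr in evy.
have vX : v \in X := xX.
have [C [CX Cn0 hC]] : exists C : {set T}, [/\ C \subset X :\ v, C != set0 &
     forall c, c \in C -> 2 <= #|[set y in C | e c y]|].
  apply: (IH (X :\ v) y).
  - by move: cX; rewrite (cardsD1 v X) vX add1n => -[].
  - by apply/set0Pn; exists y; rewrite !inE yv.
  move=> x; rewrite !inE => /andP[xv xX'].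
  have := hX x xX'; rewrite (negbTE xv) addn0.
  case: eqVneq => [->|xy]; rewrite ?addn0 ?addn1 => h.
    apply: leq_trans h _.
    rewrite -addn1 -(cards1 v); apply: leq_trans (leq_card_setU _ _).
    apply: subset_leq_card; apply/subsetP=> z; rewrite !inE.
    by case: eqVneq => //= _ ->.
  apply: leq_trans h _; apply: subset_leq_card; apply/subsetP=> z; rewrite !inE.
  case/andP=> zX exz; rewrite zX exz andbT andbT; apply/eqP=> zv; subst z.
  have : x \in [set y in X | e v y] by rewrite inE xX' sym.
  by rewrite hy inE (negbTE xy).
exists C; split=> //; apply: subset_trans CX _; exact: subsetDl.
Qed.

Lemma c2_le (V : {set T}) (r : rel T) (S : {set T}) :
  is_2conv_set V r S -> c2 V r <= #|S|.
Proof.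
move=> hS; rewrite /c2 -big_filter.
have : S \in [seq i <- index_enum {set T} | `[< is_2conv_set V r i >]].
  by rewrite mem_filter mem_index_enum andbT; apply/asboolP.
elim: [seq _ <- _ | _] => // a s IHs; rewrite inE big_cons.
case/orP=> [/eqP <-|/IHs h]; first exact: geq_minl.
exact: leq_trans (geq_minr _ _) h.
Qed.

Lemma c2_ex (V : {set T}) (r : rel T) :
  exists S, is_2conv_set V r S /\ c2 V r = #|S|.
Proof.
rewrite /c2; apply: (big_ind (fun n => exists S, is_2conv_set V r S /\ n = #|S|)).
- by exists V; split=> //; split=> //; exists 0.
- move=> a b [Sa [ha ->]] [Sb [hb ->]]; rewrite /minn; case: ltnP=> _.
    by exists Sa. by exists Sb.
- by move=> S /asboolP hS; exists S.
Qed.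


Lemma side (e d : rel T) (u v : T) (H S : {set T}) :
 simple_graph e -> cubic e -> (forall x y, d x y -> e x y) ->
 (forall w y, w \in H -> e w y -> (y \in H /\ d w y) \/ (w = u /\ y = v)) ->
 is_2conv_set setT e S -> is_2conv_set H d (S :&: H).
Proof.
case=> sym irr cub de edge hS.
have [//|[W [Wn0 WH stW WS]]] := conv_or_stuck d (subsetIr S H).
exfalso.
have hW : forall w, w \in W -> 2 <= #|[set y in W | e w y]| + (w == u).
  move=> w wW; have wH := subsetP WH w wW.
  have h3 : 3 <= #|[set y in W | d w y]| + 1 + (w == u).
    rewrite -(cub w).
    apply: leq_trans (_ : #|[set y in W | d w y] :|: [set y in H :\: W | d w y]
        :|: [set y | (w == u) && (y == v)]| <= _).
      apply: subset_leq_card; apply/subsetP => y; rewrite !inE => ewy.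
      case: (edge w y wH ewy) => [[yH dwy]|[-> ->]]; last by rewrite !eqxx !orbT.
      by rewrite dwy yH !andbT; case: (y \in W).
    apply: leq_trans (leq_card_setU _ _) _; apply: leq_add.
      apply: leq_trans (leq_card_setU _ _) _; apply: leq_add => //; exact: stW.
    case: (w == u).
rewrite /= -(cards1 v); apply: subset_leq_card; apply/subsetP => y; rewrite !inE //.
    rewrite /= leqn0 cards_eq0; apply/eqP/setP => y; rewrite !inE //.
  have : #|[set y in W | d w y]| <= #|[set y in W | e w y]|.
    apply: subset_leq_card; apply/subsetP => y; rewrite !inE => /andP[-> /de] //.
  lia.
have [C [CW Cn0 hC]] := core sym irr erefl Wn0 hW.
have stC : stuck setT e C.
  move=> c cC; have := cardsID C [set y | e c y]; rewrite cub.
  have -> : [set y | e c y] :&: C = [set y in C | e c y].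
    by apply/setP=> y; rewrite !inE andbC.
  have -> : [set y | e c y] :\: C = [set y in setT :\: C | e c y].
    by apply/setP=> y; rewrite !inE; case: (y \in C); case: (e c y).
  have := hC c cC; lia.
have CS : C :&: S = set0.
  apply/setP=> x; rewrite !inE; apply/negP=> /andP[xC xS].
  have xW := subsetP CW x xC.
  by move/setP: WS => /(_ x); rewrite !inE xW xS (subsetP WH x xW).
by move: Cn0; rewrite (stuck_conv stC CS (subsetT C) hS) eqxx.
Qed.

End Gen.

Unset Implicit Arguments.
Theorem lemma5p4 (T : finType) (e : rel T) (u v : T) :
  simple_graph e -> connected e -> cubic e ->
  e u v -> ~~ connect (del_edge e u v) u v ->
  c2 [set: T] e =
    c2 [set x | connect (del_edge e u v) u x] (del_edge e u v)
  + c2 [set x | connect (del_edge e u v) v x] (del_edge e u v).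
Proof.
move=> sg conn cub euv nc; have [sym irr] := sg.
set d := del_edge e u v in nc *.
have de : forall x y, d x y -> e x y by move=> x y /andP[].
have dsym : symmetric d by move=> x y; rewrite /d /del_edge sym setUC.
have dcs := sym_connect_sym dsym.
have pr : forall x y, e x y -> ~~ d x y -> (x = u /\ y = v) \/ (x = v /\ y = u).
  move=> x y exy; rewrite /d /del_edge exy /= negbK => /eqP E.
  have xy : x != y by apply/eqP => h; subst; rewrite irr in exy.
  have : x \in [set u; v] by rewrite -E set21.
  have : y \in [set u; v] by rewrite -E set22.
  rewrite !inE => /orP[/eqP yu|/eqP yv] /orP[/eqP xu|/eqP xv]; subst;
    rewrite ?eqxx in xy; auto; done.
set H1 := [set x | connect d u x].
set H2 := [set x | connect d v x].
have cover : forall x, (x \in H1) || (x \in H2).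
  move=> x.
  have cl : closed e [pred z | connect d u z || connect d v z].
    move=> a b eab /=.
    have [dab|ndab] := boolP (d a b).
      by rewrite !inE (same_connect_r dcs (connect1 dab) u) (same_connect_r dcs (connect1 dab) v).
    by case: (pr a b eab ndab) => -[-> ->]; rewrite !inE !connect0 ?orbT.
  by have := closed_connect cl (conn u x); rewrite !inE connect0 /= => <-.
have disj : forall x, x \in H1 -> x \in H2 -> False.
  move=> x; rewrite !inE => h1 h2; move/negP: nc; apply.
  by apply: connect_trans h1 _; rewrite dcs.
have edge1 : forall w y, w \in H1 -> e w y -> (y \in H1 /\ d w y) \/ (w = u /\ y = v).
  move=> w y wH ewy; have [dwy|ndwy] := boolP (d w y).
    by left; split=> //; move: wH; rewrite !inE => cw; apply: connect_trans cw (connect1 dwy).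
  case: (pr w y ewy ndwy) => [|[wv yu]]; first by right.
  by subst; move: wH; rewrite inE (negbTE nc).
have edge2 : forall w y, w \in H2 -> e w y -> (y \in H2 /\ d w y) \/ (w = v /\ y = u).
  move=> w y wH ewy; have [dwy|ndwy] := boolP (d w y).
    by left; split=> //; move: wH; rewrite !inE => cw; apply: connect_trans cw (connect1 dwy).
  case: (pr w y ewy ndwy) => [[wu yv]|]; last by right.
  by subst; move: wH; rewrite inE dcs (negbTE nc).
apply/eqP; rewrite eqn_leq; apply/andP; split.
  have [S1 [h1 ->]] := c2_ex H1 d.
  have [S2 [h2 ->]] := c2_ex H2 d.
  apply: leq_trans (leq_card_setU S1 S2); apply: c2_le.
  have [//|[W [Wn0 _ stW WS]]] := conv_or_stuck e (subsetT (S1 :|: S2)).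
  exfalso.
  have W1 : W :&: H1 = set0.
    apply: (stuck_conv _ _ (subsetIr W H1) h1).
      move=> w; rewrite inE => /andP[wW wH]; apply: leq_trans (stW w wW).
      apply: subset_leq_card; apply/subsetP=> y; rewrite !inE.
      by case: (y \in W) => //=; [rewrite andNb | move=> /andP[_ /de]].
    apply/setP=> x; rewrite !inE; apply/negP=> /andP[/andP[xW _] xS].
    by move/setP: WS => /(_ x); rewrite !inE xW xS.
  have W2 : W :&: H2 = set0.
    apply: (stuck_conv _ _ (subsetIr W H2) h2).
      move=> w; rewrite inE => /andP[wW wH]; apply: leq_trans (stW w wW).
      apply: subset_leq_card; apply/subsetP=> y; rewrite !inE.
      by case: (y \in W) => //=; [rewrite andNb | move=> /andP[_ /de]].
    apply/setP=> x; rewrite !inE; apply/negP=> /andP[/andP[xW _] xS].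
    by move/setP: WS => /(_ x); rewrite !inE xW xS orbT.
  case/set0Pn: Wn0 => x xW; case/orP: (cover x) => xH.
    by move/setP: W1 => /(_ x); rewrite inE xW xH inE.
  by move/setP: W2 => /(_ x); rewrite inE xW xH inE.
have [S [hS ->]] := c2_ex [set: T] e.
have s1 := side sg cub de edge1 hS.
have s2 := side sg cub de edge2 hS.
apply: leq_trans (leq_add (c2_le s1) (c2_le s2)) _.
rewrite -(cardsID H1 S) leq_add2l; apply: subset_leq_card; apply/subsetP=> x.
rewrite !inE => /andP[xS xH2]; rewrite xS andbT; apply/negP=> xH1.
by apply: (disj x); rewrite ?inE.
Qed.
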